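(* Assume $S\times M\neq\emptyset$, let $(x,\lambda):[t_0,+\infty[\ \to X\times Y$ be a solution of (AHT), for each $t\ge t_0$ let $(x_t,\lambda_t)$ be the unique zero of $T_t=T+\varepsilon(t)\mathrm{id}$, and suppose there exists $t_+\ge t_0$ such that $\varepsilon^2(t)+\dot\varepsilon(t)\ge0$ and $2\varepsilon(t)\dot\varepsilon(t)+\ddot\varepsilon(t)\le0$ for all $t\ge t_+$. Then, as $t\to+\infty$, \[ \|(\dot x(t),\dot\lambda(t))+\varepsilon(t)((x(t),\lambda(t))-(x_t,\lambda_t))\|^2=\mathcal{O}\big(e^{-2\rho(t)}+\varepsilon^2(t)\big),\qquad \|T(x(t),\lambda(t))-T(x_t,\lambda_t)\|^2=\mathcal{O}\big(e^{-2\rho(t)}+\varepsilon^2(t)\big). \]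
   Context: $X,Y$ are real Hilbert spaces; $X\times Y$ carries the product inner product and norm $\|\cdot\|$. Standing assumptions: $f:X\to\mathbb{R}$ is convex and continuously differentiable with $\nabla f$ Lipschitz continuous on bounded subsets of $X$; $A:X\to Y$ is linear and continuous with adjoint $A^*$; $b\in Y$; $\varepsilon:[t_0,+\infty[\ \to\ ]0,+\infty[$ ($t_0\ge0$) is twice continuously differentiable with $\lim_{t\to+\infty}\varepsilon(t)=0$. $L(x,\lambda)=f(x)+\langle\lambda,Ax-b\rangle_Y$ and $T(x,\lambda)=(\nabla f(x)+A^*\lambda,\ b-Ax)$ (a monotone operator). $S$ is the set of optimal solutions of $\min\{f(x):Ax=b\}$, $M$ the set of Lagrange multipliers; $S\times M$ is the set of saddle points of $L$, equal to the zero set of $T$. The operator $T_t=T+\varepsilon(t)\mathrm{id}$ is $\varepsilon(t)$-strongly monotone and has a unique zero $(x_t,\lambda_t)$ (the saddle point of $L(x,\lambda)+\frac{\varepsilon(t)}{2}(\|x\|^2-\|\lambda\|^2)$). $\rho(t)=\int_{t_0}^t\varepsilon(\tau)\,d\tau$. (AHT) is the system $\dot x+\nabla f(x)+A^*\lambda+\varepsilon(t)x=0$, $\dot\lambda+b-Ax+\varepsilon(t)\lambda=0$; a solution is a continuously differentiable $(x,\lambda):[t_0,+\infty[\ \to X\times Y$ satisfying it on $[t_0,+\infty[$ (existence and uniqueness for every initial datum is assumed). *)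

(* Defs.v *)
From HB Require Import structures.
From mathcomp Require Import all_boot all_order all_algebra.
From mathcomp Require Import all_classical all_reals all_analysis.
Set Implicit Arguments. Unset Strict Implicit. Unset Printing Implicit Defensive.
Import Order.TTheory GRing.Theory Num.Theory.
Import numFieldNormedType.Exports.
Local Open Scope classical_set_scope.
Local Open Scope ring_scope.

(* Together with completeness of V this makes V a real Hilbert space. *)
Definition is_inner_product (R : realType) (V : normedModType R)
  (ip : V -> V -> R) : Prop :=
  (forall x y : V, ip x y = ip y x) /\
  (forall (a : R) (x y z : V), ip (a *: x + y) z = a * ip x z + ip y z) /\
  (forall x : V, `|x| ^+ 2 = ip x x).

(* Squared norm in X x Y for the product inner product. *)
Definition sqnorm2 (R : realType) (X Y : normedModType R) (u : X) (v : Y) : R :=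
  `|u| ^+ 2 + `|v| ^+ 2.

Definition lagrangian (R : realType) (X Y : normedModType R)
  (ipY : Y -> Y -> R) (f : X -> R) (A : X -> Y) (b : Y) (x : X) (l : Y) : R :=
  f x + ipY l (A x - b).

Definition saddle_point (R : realType) (X Y : normedModType R)
  (L : X -> Y -> R) (xs : X) (ls : Y) : Prop :=
  forall (x : X) (l : Y), L xs l <= L xs ls /\ L xs ls <= L x ls.

(* Components of the operator T(x,l) = (grad f x + A^* l, b - A x). *)
Definition T1 (R : realType) (X Y : normedModType R)
  (gf : X -> X) (As : Y -> X) (x : X) (l : Y) : X := gf x + As l.
Definition T2 (R : realType) (X Y : normedModType R)
  (A : X -> Y) (b : Y) (x : X) : Y := b - A x.

(* f = O(g) as t -> +oo (the unfolding of MathComp-Analysis' bigO with the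
   filter +oo on R, which has no canonical filter_on instance usable by the
   =O_ notation). *)
Definition bigO_pinfty (R : realType) (f g : R -> R) : Prop :=
  exists k : R, \forall t \near +oo, `|f t| <= k * `|g t|.

(* Main.v *)
Require Import Defs.
From HB Require Import structures.
From mathcomp Require Import all_boot all_order all_algebra.
From mathcomp Require Import all_classical all_reals all_analysis.
From mathcomp Require Import ring lra.
Import Order.TTheory GRing.Theory Num.Theory.
Import numFieldNormedType.Exports.
Local Open Scope classical_set_scope.
Local Open Scope ring_scope.
Set Implicit Arguments. Unset Strict Implicit.


Section IP.
Variables (R : realType) (V : normedModType R) (ip : V -> V -> R).
Hypothesis hip : is_inner_product ip.

Lemma ipC x y : ip x y = ip y x. Proof. by case: hip. Qed.
Lemma ipZDl a x y z : ip (a *: x + y) z = a * ip x z + ip y z.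
Proof. by case: hip => _ []. Qed.
Lemma ipnn x : ip x x = `|x| ^+ 2. Proof. by case: hip => _ [] _ ->. Qed.
Lemma ip0l z : ip 0 z = 0.
Proof.
have := ipZDl 1 0 0 z; rewrite scaler0 addr0 mul1r; lra.
Qed.
Lemma ipDl x y z : ip (x + y) z = ip x z + ip y z.
Proof. by rewrite -[x in LHS]scale1r ipZDl mul1r. Qed.
Lemma ipZl a x z : ip (a *: x) z = a * ip x z.
Proof. by rewrite -[_ *: _]addr0 ipZDl ip0l addr0. Qed.
Lemma ipNl x z : ip (- x) z = - ip x z.
Proof. by rewrite -scaleN1r ipZl mulN1r. Qed.
Lemma ipBl x y z : ip (x - y) z = ip x z - ip y z.
Proof. by rewrite ipDl ipNl. Qed.
Lemma ipDr x y z : ip z (x + y) = ip z x + ip z y.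
Proof. by rewrite ipC ipDl !(ipC z). Qed.
Lemma ipZr a x z : ip z (a *: x) = a * ip z x.
Proof. by rewrite ipC ipZl ipC. Qed.
Lemma ipNr x z : ip z (- x) = - ip z x.
Proof. by rewrite ipC ipNl ipC. Qed.
Lemma ipBr x y z : ip z (x - y) = ip z x - ip z y.
Proof. by rewrite ipDr ipNr. Qed.
Lemma ip0r z : ip z 0 = 0.
Proof. by rewrite ipC ip0l. Qed.

Lemma normD2 x y : `|x + y| ^+ 2 = `|x| ^+ 2 + 2 * ip x y + `|y| ^+ 2.
Proof. by rewrite -!ipnn ipDl !ipDr (ipC y x); ring. Qed.
Lemma normB2 x y : `|x - y| ^+ 2 = `|x| ^+ 2 - 2 * ip x y + `|y| ^+ 2.
Proof. by rewrite -!ipnn ipBl !ipBr (ipC y x); ring. Qed.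

Lemma ip_polar x y : ip x y = (`|x + y| ^+ 2 - `|x - y| ^+ 2) / 4.
Proof. by rewrite normD2 normB2; field. Qed.

Lemma ip_le x y : 2 * ip x y <= `|x| ^+ 2 + `|y| ^+ 2.
Proof. have := normB2 x y; have := normr_ge0 (x - y); nra. Qed.

Lemma ipD_le2 a c : ip (a + c) (a + c) <= 2 * ip a a + 2 * ip c c.
Proof.
have h := ip_le a c; rewrite -!ipnn in h.
rewrite ipDl !ipDr (ipC c a); lra.
Qed.

Lemma ipB_le2 a c : ip a a <= 2 * ip (a - c) (a - c) + 2 * ip c c.
Proof. by have := ipD_le2 (a - c) c; rewrite subrK. Qed.

Lemma ip_ge0 a : 0 <= ip a a.
Proof. by rewrite ipnn sqr_ge0. Qed.

Lemma ipZZ e a : ip (e *: a) (e *: a) = e ^+ 2 * ip a a.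
Proof. by rewrite ipZl ipZr mulrA expr2. Qed.

End IP.



Section Calc.
Variables (R : realType).

Lemma is_derive_cvg (V : normedModType R) (f : R -> V) (a : R) (d : V) :
  (fun h => h^-1 *: (f (h + a) - f a)) @ 0^' --> d -> is_derive a 1 f d.
Proof.
move=> H.
have E : (fun h : R => h^-1 *: ((f \o shift a) (h *: 1) - f a)) =
   (fun h => h^-1 *: (f (h + a) - f a)).
  by apply/funext => h /=; rewrite [h *: 1]mulr1.
split; first by apply/cvg_ex; exists d; rewrite /= E.
by rewrite /derive E; apply: cvg_lim.
Qed.

Lemma cvg_is_derive (V : normedModType R) (f : R -> V) (a : R) (d : V) :
  is_derive a 1 f d -> (fun h => h^-1 *: (f (h + a) - f a)) @ 0^' --> d.
Proof.
move=> [Hd <-].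
have E : (fun h : R => h^-1 *: ((f \o shift a) (h *: 1) - f a)) =
   (fun h => h^-1 *: (f (h + a) - f a)).
  by apply/funext => h /=; rewrite [h *: 1]mulr1.
by move: Hd; rewrite /derivable /derive E.
Qed.

Lemma is_derive_cont (V : normedModType R) (f : R -> V) (a : R) (d : V) :
  is_derive a 1 f d -> {for a, continuous f}.
Proof.
by move=> [Hd _]; apply/differentiable_continuous/derivable1_diffP.
Qed.

Lemma shift_cvg0 (V : normedModType R) (f : R -> V) (a : R) :
  {for a, continuous f} -> (fun h => f (h + a)) @ 0^' --> f a.
Proof.
move=> cf.
have h1 : (fun h : R => h + a) @ 0^' --> a.
  rewrite -[X in _ --> X]add0r; apply: cvgD; last exact: cvg_cst.
  exact: cvg_within.
exact: (continuous_cvg _ cf h1).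
Qed.

Variables (V : normedModType R) (ip : V -> V -> R).
Hypothesis hip : is_inner_product ip.

Lemma ip_cvg (T : Type) (F : set_system T) (FF : Filter F) (a b : T -> V) A B :
  a @ F --> A -> b @ F --> B -> (fun x => ip (a x) (b x)) @ F --> ip A B.
Proof.
move=> ca cb.
have E : (fun x => ip (a x) (b x)) =
  (fun x => (`|a x + b x| * `|a x + b x| - `|a x - b x| * `|a x - b x|) / 4).
  by apply/funext => x; rewrite (ip_polar hip) !expr2.
rewrite E (ip_polar hip) !expr2.
apply: cvgMl; apply: cvgB; apply: cvgM; apply: cvg_norm;
  solve [apply: cvgD => // | apply: cvgB => //].
Qed.

Lemma is_derive_ip (u v : R -> V) (t : R) (du dv : V) :
  is_derive t 1 u du -> is_derive t 1 v dv ->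
  is_derive t 1 (fun s => ip (u s) (v s)) (ip du (v t) + ip (u t) dv).
Proof.
move=> Hu Hv; apply: is_derive_cvg.
have E : (fun h => h^-1 *: (ip (u (h + t)) (v (h + t)) - ip (u t) (v t))) =
  (fun h => ip (h^-1 *: (u (h + t) - u t)) (v (h + t)) +
            ip (u t) (h^-1 *: (v (h + t) - v t))).
  apply/funext => h.
  rewrite (ipZl hip) (ipZr hip) (ipBl hip) (ipBr hip) /GRing.scale /=; ring.
rewrite E; apply: cvgD; apply: ip_cvg.
- exact: cvg_is_derive.
- exact/shift_cvg0/(is_derive_cont Hv).
- exact: cvg_cst.
- exact: cvg_is_derive.
Qed.

End Calc.



Section Mono.
Variable R : realType.


Lemma nonincr_deriv (f df : R -> R) (a : R) :
  (forall t, a < t -> is_derive t 1 f (df t)) -> (forall t, a < t -> df t <= 0) ->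
  forall x y, a < x -> x <= y -> f y <= f x.
Proof.
move=> hd hn x y ax xy.
have [c cxy E] : exists2 c, c \in `[x, y]%R & f y - f x = df c * (y - x).
  apply: MVT_segment => //.
    move=> z; rewrite in_itv /= => /andP[xz _]; apply: hd; exact: lt_trans xz.
  apply/continuous_in_subspaceT => z; rewrite inE /= in_itv /= => /andP[xz _].
  apply: (@is_derive_cont _ _ _ _ (df z)); apply: hd; exact: lt_le_trans xz.
have : df c * (y - x) <= 0.
  rewrite mulr_le0_ge0 ?subr_ge0 //; apply: hn.
  by move: cxy; rewrite in_itv /= => /andP[xc _]; exact: lt_le_trans xc.
rewrite -E; lra.
Qed.

Lemma dnbhs_right (V : topologicalType) (g : R -> V) (l : V) :
  g @ 0^' --> l -> g @ 0^'+ --> l.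
Proof.
move=> H P /H /=; rewrite /dnbhs /at_right /within /= ?nbhs_filterE /=.
apply: filterS => y h y0; apply: h; exact: lt0r_neq0.
Qed.

End Mono.

Section Grad.
Variables (R : realType) (X : normedModType R) (ipX : X -> X -> R).
Variables (f : X -> R) (gf : X -> X).
Hypothesis hipX : is_inner_product ipX.
Hypothesis fdiff : forall u : X, differentiable f u.
Hypothesis fgrad : forall u v : X, 'd f u v = ipX (gf u) v.

Lemma dir_cvg (u w : X) :
  (fun a : R => a^-1 * (f (u + a *: w) - f u)) @ 0^'+ --> ipX (gf u) w.
Proof.
apply: dnbhs_right.
have hd : derivable f u w by apply: diff_derivable.
have H1 : (fun h : R => h^-1 *: ((f \o shift u) (h *: w) - f u)) @ 0^' --> 'D_w f u := hd.
have E : (fun h : R => h^-1 *: ((f \o shift u) (h *: w) - f u)) =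
  (fun a : R => a^-1 * (f (u + a *: w) - f u)).
  by rewrite funeqE => h /=; rewrite [h *: w + u]addrC.
have E2 : 'D_w f u = ipX (gf u) w by rewrite deriveE // fgrad.
by rewrite -E -E2.
Qed.

Lemma grad_le (u w : X) (K : R) :
  (forall a : R, 0 < a <= 1 -> f (u + a *: w) - f u <= a * K) -> ipX (gf u) w <= K.
Proof.
move=> H; apply: (@cvgr_to_le _ _ _ _ _ _ K (@dir_cvg u w)).
near=> a.
have a0 : 0 < a by near: a; exact: nbhs_right_gt.
have a1 : a <= 1 by near: a; apply: nbhs_right_le; exact: ltr01.
rewrite ler_pdivrMl //; apply: H; by rewrite a0 a1.
Unshelve. all: by end_near. Qed.

Lemma grad_ge (u w : X) (K : R) :
  (forall a : R, 0 < a <= 1 -> a * K <= f (u + a *: w) - f u) -> K <= ipX (gf u) w.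
Proof.
move=> H; apply: (@cvgr_to_ge _ _ _ _ _ _ K (@dir_cvg u w)).
near=> a.
have a0 : 0 < a by near: a; exact: nbhs_right_gt.
have a1 : a <= 1 by near: a; apply: nbhs_right_le; exact: ltr01.
rewrite ler_pdivlMl //; apply: H; by rewrite a0 a1.
Unshelve. all: by end_near. Qed.

Hypothesis fconv : forall (u v : X) (a : R), 0 <= a <= 1 ->
     f (a *: u + (1 - a) *: v) <= a * f u + (1 - a) * f v.

Lemma convex_grad (u v : X) : ipX (gf u) (v - u) <= f v - f u.
Proof.
apply: grad_le => a /andP[a0 a1].
have := (@fconv v u a); rewrite ltW //= a1 => /(_ isT).
have -> : a *: v + (1 - a) *: u = u + a *: (v - u).
  by rewrite scalerBl scale1r scalerBr addrCA.
lra.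
Qed.

Lemma gf_mono (u v : X) : 0 <= ipX (gf u - gf v) (u - v).
Proof.
have h1 := convex_grad u v; have h2 := convex_grad v u.
have : ipX (gf u) (v - u) = - ipX (gf u) (u - v).
  by rewrite -(ipNr hipX) opprB.
rewrite (ipBl hipX); lra.
Qed.

End Grad.



Section FTC.
Variable R : realType.

Lemma ftc_deriv (g : R -> R) (a t : R) :
  {within `[a, +oo[, continuous g} -> a < t ->
  is_derive t 1 (fun s => Rintegral lebesgue_measure `[a, s] g) (g t).
Proof.
move=> cg at_.
have ti : t < t + 1 by rewrite ltrDl.
have hint : lebesgue_measure.-integrable `[a, t + 1] (EFin \o g).
  apply: continuous_compact_integrable; first exact: segment_compact.
  apply: continuous_subspaceW cg; apply: subset_itvl; by rewrite bnd_simp.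
have ct : {for t, continuous g}.
  have [h _] := (continuous_within_itvcyP a g).1 cg.
  by apply: h; rewrite in_itv /= andbT.
have [d1 d2] := continuous_FTC1_closed ti hint at_ ct.
split; first exact: d1.
by rewrite -derive1E.
Qed.
End FTC.



Section Alg.
Variables (R : realType) (X Y : normedModType R).
Variables (ipX : X -> X -> R) (ipY : Y -> Y -> R).
Variables (gf : X -> X) (A : X -> Y) (As : Y -> X) (b : Y).
Hypothesis hipX : is_inner_product ipX.
Hypothesis hipY : is_inner_product ipY.
Hypothesis Aadj : forall (u : X) (w : Y), ipY (A u) w = ipX u (As w).
Hypothesis gmono : forall u v, 0 <= ipX (gf u - gf v) (u - v).

Lemma ipAs u w : ipX (As w) u = ipY (A u) w.
Proof. by rewrite Aadj (ipC hipX). Qed.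

Ltac ipexp := do 6 rewrite ?(ipDl hipX) ?(ipBl hipX) ?(ipNl hipX) ?(ipZl hipX)
   ?(ipDr hipX) ?(ipBr hipX) ?(ipNr hipX) ?(ipZr hipX)
   ?(ipDl hipY) ?(ipBl hipY) ?(ipNl hipY) ?(ipZl hipY)
   ?(ipDr hipY) ?(ipBr hipY) ?(ipNr hipY) ?(ipZr hipY) ?ipAs.

Lemma keyT (xa xc : X) (la lc : Y) (al be : R) :
 ipX ((- (gf xa + As la) - al *: xa) - (- (gf xc + As lc) - be *: xc)) (xa - xc)
 + ipY ((A xa - b - al *: la) - (A xc - b - be *: lc)) (la - lc)
 <= - ((al + be) / 2) * (`|xa - xc| ^+ 2 + `|la - lc| ^+ 2)
    - ((al - be) / 2) * (`|xa| ^+ 2 + `|la| ^+ 2 - `|xc| ^+ 2 - `|lc| ^+ 2).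
Proof.
have m := gmono xa xc.
rewrite (normB2 hipX) (normB2 hipY) -!(ipnn hipX) -!(ipnn hipY).
move: m; ipexp.
rewrite (ipC hipX xc xa) (ipC hipY lc la).
move=> m.
set u1 := ipX (gf xa) xa in m *.
nra.
Qed.


Lemma keyR (x xs : X) (l ls : Y) (e : R) :
  0 <= e -> gf xs + As ls = 0 -> A xs = b ->
  ipX (- (gf x + As l) - e *: x) (x - xs) + ipY (A x - b - e *: l) (l - ls)
  <= - (e / 2) * (`|x - xs| ^+ 2 + `|l - ls| ^+ 2 - `|xs| ^+ 2 - `|ls| ^+ 2).
Proof.
move=> e0 hs1 hs2.
have m := gmono x xs.
have g1 : gf xs = - As ls by apply/eqP; rewrite -subr_eq0 opprK hs1.
rewrite g1 in m; rewrite -hs2.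
rewrite (normB2 hipX) (normB2 hipY) -!(ipnn hipX) -!(ipnn hipY).
move: m; ipexp.
rewrite ?(ipC hipX xs x) ?(ipC hipY ls l).
move=> m.
have h1 : 0 <= e * ipX x x by rewrite mulr_ge0 // (ipnn hipX) sqr_ge0.
have h2 : 0 <= e * ipY l l by rewrite mulr_ge0 // (ipnn hipY) sqr_ge0.
nra.
Qed.

Lemma keyZ (xt xs : X) (lt ls : Y) (e : R) :
  0 < e -> gf xs + As ls = 0 -> A xs = b ->
  gf xt + As lt + e *: xt = 0 -> b - A xt + e *: lt = 0 ->
  `|xt| ^+ 2 + `|lt| ^+ 2 <= `|xs| ^+ 2 + `|ls| ^+ 2.
Proof.
move=> e0 hs1 hs2 ht1 ht2.
have m := gmono xt xs.
have g1 : gf xs = - As ls by apply/eqP; rewrite -subr_eq0 opprK hs1.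
have g2 : gf xt = - As lt - e *: xt.
  by rewrite -[gf xt]subr0 -ht1 !opprD !addrA subrr add0r.
have a2 : A xt = A xs + e *: lt.
  by rewrite -[A xt]addr0 -ht2 -hs2 addrA addrCA subrr addr0.
rewrite g1 g2 in m.
move: m; ipexp; rewrite a2; ipexp.
rewrite ?(ipC hipX xs xt) ?(ipC hipY ls lt).
move=> m.
have S : ipX xt xt - ipX xt xs + (ipY lt lt - ipY lt ls) <= 0.
  rewrite -(pmulr_rle0 _ e0); nra.
have i1 := ip_le hipX xt xs; have i2 := ip_le hipY lt ls.
rewrite -!(ipnn hipX) -!(ipnn hipY) in i1 i2 *.
lra.
Qed.

End Alg.

Section Saddle.
Variables (R : realType) (X Y : normedModType R).
Variables (ipX : X -> X -> R) (ipY : Y -> Y -> R).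
Variables (f : X -> R) (gf : X -> X) (A : {linear X -> Y}) (As : Y -> X) (b : Y).
Hypothesis hipX : is_inner_product ipX.
Hypothesis hipY : is_inner_product ipY.
Hypothesis Aadj : forall (u : X) (w : Y), ipY (A u) w = ipX u (As w).
Hypothesis fdiff : forall u : X, differentiable f u.
Hypothesis fgrad : forall u v : X, 'd f u v = ipX (gf u) v.

Lemma norm_sq_le0 (V : normedModType R) (v : V) : `|v| ^+ 2 <= 0 -> v = 0.
Proof.
move=> h; have : `|v| ^+ 2 = 0 by apply/eqP; rewrite eq_le h sqr_ge0.
by move/eqP; rewrite sqrf_eq0 normr_eq0 => /eqP.
Qed.

Lemma saddle_zero xs ls : saddle_point (lagrangian ipY f A b) xs ls ->
  gf xs + As ls = 0 /\ A xs = b.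
Proof.
move=> sp.
have hA : A xs = b.
  set w := A xs - b.
  have := (sp xs (ls + w)).1; rewrite /lagrangian -/w (ipDl hipY) (ipnn hipY) => h.
  have : `|w| ^+ 2 <= 0 by lra.
  by move/norm_sq_le0 => /eqP; rewrite subr_eq0 => /eqP.
split => //.
set g := gf xs + As ls.
have key : forall w, - ipX w (As ls) <= ipX (gf xs) w.
  move=> w; apply: (grad_ge fdiff fgrad) => a /andP[a0 a1].
  have := (sp (xs + a *: w) ls).2; rewrite /lagrangian hA subrr (ip0r hipY).
  rewrite linearD linearZ /= hA addrAC subrr add0r (ipZr hipY) (ipC hipY) Aadj.
  lra.
have := key (- g); rewrite (ipNl hipX) (ipNr hipX) opprK => h.
have : `|g| ^+ 2 <= 0.
  rewrite -(ipnn hipX) {1}/g (ipDl hipX) (ipC hipX (As ls)); lra.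
exact: norm_sq_le0.
Qed.

End Saddle.



Section Gen.
Variable R : realType.

Lemma is_derive_shiftarg (V : normedModType R) (u : R -> V) (t h : R) (d : V) :
  is_derive (t + h) 1 u d -> is_derive t 1 (fun s => u (s + h)) d.
Proof.
move=> /cvg_is_derive H; apply: is_derive_cvg.
have E : (fun k : R => k^-1 *: (u (k + t + h) - u (t + h))) =
         (fun k : R => k^-1 *: (u (k + (t + h)) - u (t + h))).
  by rewrite funeqE => k; rewrite addrA.
by rewrite E.
Qed.

Lemma is_derive_subf (V : normedModType R) (u v : R -> V) (t : R) (du dv : V) :
  is_derive t 1 u du -> is_derive t 1 v dv -> is_derive t 1 (fun s => u s - v s) (du - dv).
Proof. move=> hu hv; exact: (is_deriveB (f:=u) (g:=v)). Qed.

Lemma is_derive_addf (V : normedModType R) (u v : R -> V) (t : R) (du dv : V) :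
  is_derive t 1 u du -> is_derive t 1 v dv -> is_derive t 1 (fun s => u s + v s) (du + dv).
Proof. move=> hu hv; exact: (is_deriveD (f:=u) (g:=v)). Qed.

Lemma is_derive_mulf (u v : R -> R) (t : R) (du dv : R) :
  is_derive t 1 u du -> is_derive t 1 v dv ->
  is_derive t 1 (fun s => u s * v s) (du * v t + u t * dv).
Proof.
move=> hu hv; apply: (is_derive_eq (is_deriveM hu hv)).
rewrite /GRing.scale /=; ring.
Qed.

Lemma is_derive_cstf (V : normedModType R) (c : V) (t : R) :
  is_derive t 1 (fun _ : R => c) 0.
Proof. exact: is_derive_cst. Qed.

Lemma solve4 (V : zmodType) (a p q r : V) : a + p + q + r = 0 -> a = - (p + q) - r.
Proof. by move=> h; apply/eqP; rewrite -subr_eq0 -h; apply/eqP; rewrite opprD !opprK !addrA. Qed.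

Lemma filter_pick (P : R -> Prop) : (\forall h \near 0^'+, P h) -> exists h, P h.
Proof. move=> H; apply: (@filter_ex R (0:R)^'+ _ P). exact H. Qed.

End Gen.



Lemma rb_arith (R : realType) (rt r1 c P1 Pt : R) : 0 < P1 -> 0 < Pt -> P1 <= Pt ->
  0 <= r1 -> 0 <= c -> (rt - c) * Pt <= (r1 - c) * P1 -> rt <= r1 + c.
Proof. move=> *; case: (lerP (r1 - c) 0) => hc; nra. Qed.

Lemma F2_arith (R : realType) (a1 a2 nDx nDl n1 n2 n3 n4 d1 d0 al be G : R) :
 a1 + a2 <= - ((al + be) / 2) * (nDx + nDl) - ((al - be) / 2) * (n1 + n3 - n2 - n4) ->
 G * (d1 + al * al - (d0 + be * be)) <= 0 ->
 a1 + a1 + (a2 + a2) + ((d1 - d0) * G + (al - be) * (n1 + n3 - n2 - n4))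
   + (al + be) * (nDx + nDl + (al - be) * G) <= 0.
Proof. move=> h1 h2; nra. Qed.

Lemma dW_arith (R : realType) (a b p q : R) : b * p * q + p * (a * q) = (a + b) * (p * q).
Proof. ring. Qed.

Lemma Es_arith (R : realType) (a b d G h M1 M2 B e : R) :
  a <= h ^+ 2 * M1 -> b <= h ^+ 2 * M1 -> d = e * h -> `|e| <= M2 ->
  0 <= G <= h * B -> 0 < h -> a + b + d * G <= h ^+ 2 * (2 * M1 + M2 * B).
Proof.
move=> ha hb -> he /andP[g0 g1] h0.
have /andP[e1 e2] : - M2 <= e <= M2 by rewrite -ler_norml.
have M20 : 0 <= M2 by apply: le_trans (normr_ge0 e) he.
have f1 : 0 <= (M2 - e) * (h * G).
  by apply: mulr_ge0; [rewrite subr_ge0 | apply: mulr_ge0 => //; exact: ltW].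
have f2 : 0 <= M2 * h * (h * B - G).
  by apply: mulr_ge0; [apply: mulr_ge0 => //; exact: ltW | rewrite subr_ge0].
rewrite expr2; nra.
Qed.

Lemma EF_arith (R : realType) (E Es Ws Wt Pt et K1 C0 h2 Pe1 Pe0 : R) :
  E * Wt <= Es * Ws -> Es <= h2 * C0 -> 0 < Ws -> Ws <= Pe1 -> Pe1 = K1 * Pe0 ^+ 2 ->
  Pe0 <= Pt * et -> Pt ^+ 2 <= Wt -> 0 < Pt -> 0 <= Pe0 -> 0 <= C0 -> 0 <= K1 -> 0 <= h2 ->
  E <= h2 * (C0 * K1) * et ^+ 2.
Proof.
move=> hF hE Wsp W1 W2 W3 Wt1 Pt0 Pe00 C00 K10 h20.
have R0 : 0 <= h2 * (C0 * K1) * et ^+ 2.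
  by apply: mulr_ge0; [apply: mulr_ge0 => //; exact: mulr_ge0 | exact: sqr_ge0].
case: (lerP E 0) => hE0; first exact: le_trans hE0 R0.
have Pt2 : 0 < Pt ^+ 2 by rewrite exprn_gt0.
rewrite -(ler_pM2r Pt2).
have sq : Pe0 ^+ 2 <= (Pt * et) ^+ 2.
  by rewrite ler_sqr // ?nnegrE // (le_trans Pe00 W3).
apply: le_trans (_ : E * Wt <= _); first by rewrite ler_wpM2l // ltW.
apply: le_trans hF _.
apply: le_trans (_ : h2 * C0 * Ws <= _); first by rewrite ler_wpM2r // ltW.
apply: le_trans (_ : h2 * C0 * (K1 * (Pt * et) ^+ 2) <= _).
  rewrite ler_wpM2l ?mulr_ge0 //; apply: le_trans W1 _; rewrite W2 ler_wpM2l //.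
by rewrite exprMn le_eqVlt; apply/orP; left; apply/eqP; ring.
Qed.

Lemma K1_arith (R : realType) (a c e : R) : a != 0 -> e != 0 ->
  a * c = c / (a * e ^+ 2) * (a * e) ^+ 2.
Proof. by move=> ha he; field; rewrite ha he. Qed.

Lemma final_arith (R : realType) (qx ql del G h K e B dx dl nx nl : R) :
  h ^+ 2 * qx + h ^+ 2 * ql + del * G <= h ^+ 2 * K * e ^+ 2 ->
  - 2 * e ^+ 2 * h <= del -> 0 <= G -> G <= h * B ->
  dx <= e ^+ 2 -> dl <= e ^+ 2 -> nx <= 2 * dx + 2 * qx -> nl <= 2 * dl + 2 * ql ->
  0 < h -> 0 <= K -> 0 <= B ->
  nx + nl <= (2 * K + 4 * B + 4) * e ^+ 2.
Proof.
move=> hE hd G0 G1 hdx hdl hbx hbl h0 K0 B0.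
have e0 : 0 <= e ^+ 2 by exact: sqr_ge0.
have f1 : - del * G <= 2 * e ^+ 2 * h * G by rewrite mulNr -mulNr ler_wpM2r //; lra.
have f2 : 2 * e ^+ 2 * h * G <= 2 * e ^+ 2 * h * (h * B).
  apply: ler_wpM2l => //; apply: mulr_ge0; [apply: mulr_ge0 => //| exact: ltW].
have h2 : 0 < h ^+ 2 by rewrite exprn_gt0.
have q : qx + ql <= (K + 2 * B) * e ^+ 2.
  rewrite -(ler_pM2l h2).
  have : h ^+ 2 * (qx + ql) <= h ^+ 2 * K * e ^+ 2 + 2 * e ^+ 2 * h * (h * B) by nra.
  move=> hq; apply: le_trans hq _; rewrite le_eqVlt; apply/orP; left; apply/eqP; ring.
nra.
Qed.

Lemma fb_arith (R : realType) (a1 a2 q1 q2 d1 d2 n1 n2 z1 z2 K2 B c2 e2 : R) :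
  a1 <= 2 * q1 + 2 * (e2 * d1) -> a2 <= 2 * q2 + 2 * (e2 * d2) ->
  d1 <= 2 * n1 + 2 * z1 -> d2 <= 2 * n2 + 2 * z2 ->
  q1 + q2 <= K2 * e2 -> n1 + n2 <= B -> z1 + z2 <= c2 -> 0 <= e2 ->
  a1 + a2 <= (2 * K2 + 4 * (B + c2)) * e2.
Proof.
move=> h1 h2 h3 h4 h5 h6 h7 e0.
have : e2 * (d1 + d2) <= e2 * (2 * (B + c2)).
  by apply: ler_wpM2l => //; lra.
nra.
Qed.

Section Main.
Variables (R : realType) (X Y : normedModType R).
Variables (ipX : X -> X -> R) (ipY : Y -> Y -> R).
Variables (f : X -> R) (gf : X -> X) (A : {linear X -> Y}) (As : Y -> X) (b : Y).
Variables (eps : R -> R) (t0 : R) (x : R -> X) (l : R -> Y) (xt : R -> X) (lt : R -> Y).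
Hypothesis hipX : is_inner_product ipX.
Hypothesis hipY : is_inner_product ipY.
Hypothesis fconv : forall (u v : X) (a : R), 0 <= a <= 1 ->
     f (a *: u + (1 - a) *: v) <= a * f u + (1 - a) * f v.
Hypothesis fdiff : forall u : X, differentiable f u.
Hypothesis fgrad : forall u v : X, 'd f u v = ipX (gf u) v.
Hypothesis Aadj : forall (u : X) (w : Y), ipY (A u) w = ipX u (As w).
Hypothesis epos : forall t, t0 <= t -> 0 < eps t.
Hypothesis econt : {within `[t0, +oo[, continuous eps}.
Hypothesis edH : forall t, t0 < t -> derivable eps t 1 /\ derivable (derive1 eps) t 1
                        /\ {for t, continuous (derive1n 2 eps)}.
Hypothesis xdH : forall t, t0 < t -> derivable x t 1 /\ derivable l t 1 /\
     {for t, continuous (derive1 x)} /\ {for t, continuous (derive1 l)}.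
Hypothesis ode : forall t, t0 < t ->
     derive1 x t + gf (x t) + As (l t) + eps t *: x t = 0 /\
     derive1 l t + b - A (x t) + eps t *: l t = 0.
Hypothesis ztH : forall t, t0 <= t ->
     T1 gf As (xt t) (lt t) + eps t *: xt t = 0 /\
     T2 A b (xt t) + eps t *: lt t = 0.
Variables (xs : X) (ls : Y).
Hypothesis hs1 : gf xs + As ls = 0.
Hypothesis hs2 : A xs = b.
Variable tp : R.
Hypothesis tp0 : t0 <= tp.
Hypothesis tpc : forall t, tp < t ->
     eps t ^+ 2 + derive1 eps t >= 0 /\
     2 * eps t * derive1 eps t + derive1n 2 eps t <= 0.

Let gmono := gf_mono hipX fdiff fgrad fconv.

Let xd t := derive1 x t.
Let ld t := derive1 l t.

Lemma xD t : t0 < t -> is_derive t 1 x (xd t).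
Proof. by move=> /xdH [h _]; rewrite /xd derive1E; exact: derivableP. Qed.
Lemma lD t : t0 < t -> is_derive t 1 l (ld t).
Proof. by move=> /xdH [_ [h _]]; rewrite /ld derive1E; exact: derivableP. Qed.
Lemma eD t : t0 < t -> is_derive t 1 eps (derive1 eps t).
Proof. by move=> /edH [h _]; rewrite derive1E; exact: derivableP. Qed.
Lemma eD2 t : t0 < t -> is_derive t 1 (derive1 eps) (derive1n 2 eps t).
Proof. by move=> /edH [_ [h _]]; rewrite /derive1n /= derive1E; exact: derivableP. Qed.

Lemma odex t : t0 < t -> xd t = - (gf (x t) + As (l t)) - eps t *: x t.
Proof. by move=> /ode [h _]; apply: solve4. Qed.
Lemma odel t : t0 < t -> ld t = A (x t) - b - eps t *: l t.
Proof. by move=> /ode [_ h]; rewrite /ld (solve4 h) opprB. Qed.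

Let c2 := `|xs| ^+ 2 + `|ls| ^+ 2.
Let N t := `|x t| ^+ 2 + `|l t| ^+ 2.
Let rho t := Rintegral lebesgue_measure `[t0, t] eps.
Let P t := expR (rho t).

Lemma PD t : t0 < t -> is_derive t 1 P (eps t * P t).
Proof.
move=> ht; apply: (is_derive_eq (is_derive1_comp (f:=expR) (g:=rho) _ _)).
- exact: ftc_deriv.
- by rewrite mulrC.
Qed.

Lemma Ppos t : 0 < P t. Proof. exact: expR_gt0. Qed.

Lemma Pmono u v : t0 < u -> u <= v -> P u <= P v.
Proof.
move=> hu huv.
have := @nonincr_deriv _ (fun s => - P s) (fun s => - (eps s * P s)) t0.
move=> /(_ _ _ u v hu huv); rewrite lerN2; apply.
- by move=> s hs; apply: is_deriveN; exact: PD.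
- move=> s hs; rewrite oppr_le0; apply: mulr_ge0; last exact/ltW/Ppos.
  by apply/ltW/epos/ltW.
Qed.


Let r t := ipX (x t - xs) (x t - xs) + ipY (l t - ls) (l t - ls).

Lemma rD t : t0 < t ->
  is_derive t 1 r (2 * (ipX (xd t) (x t - xs) + ipY (ld t) (l t - ls))).
Proof.
move=> ht.
have hx : is_derive t 1 (fun s => x s - xs) (xd t - 0).
  exact: is_derive_subf (xD ht) (is_derive_cstf _ _).
have hl : is_derive t 1 (fun s => l s - ls) (ld t - 0).
  exact: is_derive_subf (lD ht) (is_derive_cstf _ _).
rewrite !subr0 in hx hl.
apply: (is_derive_eq (is_derive_addf (is_derive_ip hipX hx hx) (is_derive_ip hipY hl hl))).
rewrite (ipC hipX (x t - xs)) (ipC hipY (l t - ls)); ring.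
Qed.

Lemma rD_le t : t0 < t ->
  2 * (ipX (xd t) (x t - xs) + ipY (ld t) (l t - ls)) <= - eps t * (r t - c2).
Proof.
move=> ht.
have e0 : 0 <= eps t by apply/ltW/epos/ltW.
have := keyR hipX hipY Aadj gmono (x t) (l t) e0 hs1 hs2.
rewrite -(odex ht) -(odel ht) /r /c2 -!(ipnn hipX) -!(ipnn hipY).
lra.
Qed.

Let t1 := tp + 1.
Lemma t1_gt : t0 < t1. Proof. rewrite /t1; have := tp0; lra. Qed.

Lemma r_bound t : t1 <= t -> r t <= r t1 + c2.
Proof.
move=> ht.
pose g s := (r s - c2) * P s.
have hg : g t <= g t1.
  apply: (@nonincr_deriv _ g (fun s => 2 * (ipX (xd s) (x s - xs) + ipY (ld s) (l s - ls)) * P s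
            + (r s - c2) * (eps s * P s)) t0) => //; last exact: t1_gt.
  - move=> s hs; apply: is_derive_mulf; last exact: PD.
    apply: (is_derive_eq (is_derive_subf (V:=R^o) (rD hs) (is_derive_cstf _ _))).
    by rewrite subr0.
  - move=> s hs; have := rD_le hs; have := Ppos s.
    nra.
have c20 : 0 <= c2 by rewrite /c2 addr_ge0 // sqr_ge0.
have r10 : 0 <= r t1 by rewrite /r addr_ge0 // ip_ge0.
have P1 := Ppos t1; have Pt := Ppos t.
have Pm : P t1 <= P t by apply: Pmono => //; exact: t1_gt.
rewrite /g in hg.
exact: (rb_arith P1 Pt Pm r10 c20 hg).
Qed.

Let B := 2 * (r t1 + c2) + 2 * c2.

Lemma N_bound t : t1 <= t -> N t <= B.
Proof.
move=> ht; have := r_bound ht.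
have := ipB_le2 hipX (x t) xs; have := ipB_le2 hipY (l t) ls.
rewrite /N /B /r /c2 -!(ipnn hipX) -!(ipnn hipY); lra.
Qed.

Lemma B_ge0 : 0 <= B.
Proof.
have c20 : 0 <= c2 by rewrite /c2 addr_ge0 // sqr_ge0.
have r10 : 0 <= r t1 by rewrite /r addr_ge0 // ip_ge0.
rewrite /B; lra.
Qed.

Lemma zt_bound t : t0 <= t -> ipX (xt t) (xt t) + ipY (lt t) (lt t) <= c2.
Proof.
move=> ht; have [h1 h2] := ztH ht.
have := keyZ hipX hipY Aadj gmono (epos ht) hs1 hs2 h1 h2.
by rewrite /c2 -!(ipnn hipX) -!(ipnn hipY).
Qed.

Let phi s := derive1 eps s + eps s * eps s.

Lemma phi_mono u v : tp < u -> u <= v -> phi v <= phi u.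
Proof.
move=> hu huv.
apply: (@nonincr_deriv _ phi (fun s => derive1n 2 eps s +
   (derive1 eps s * eps s + eps s * derive1 eps s)) tp) => //.
- move=> s hs; have hs0 : t0 < s by apply: le_lt_trans hs.
  apply: (is_derive_addf (V:=R^o) (eD2 hs0)).
  exact: is_derive_mulf (eD hs0) (eD hs0).
- move=> s hs; have [_ h] := tpc hs; lra.
Qed.

Lemma phi_ge0 u : tp < u -> 0 <= phi u.
Proof. move=> hu; have [h _] := tpc hu; rewrite /phi; rewrite expr2 in h; lra. Qed.

Lemma Pe_mono u v : tp < u -> u <= v -> P u * eps u <= P v * eps v.
Proof.
move=> hu huv.
have := @nonincr_deriv _ (fun s => - (P s * eps s))
  (fun s => - ((eps s * P s) * eps s + P s * derive1 eps s)) tp.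
move=> /(_ _ _ u v hu huv); rewrite lerN2; apply.
- move=> s hs; have hs0 : t0 < s by apply: le_lt_trans hs.
  apply: is_deriveN; exact: is_derive_mulf (PD hs0) (eD hs0).
- move=> s hs; have [h _] := tpc hs; have := Ppos s; rewrite expr2 in h.
  rewrite oppr_le0 => Ps; nra.
Qed.

Lemma ND t : t0 < t -> is_derive t 1 N (2 * (ipX (xd t) (x t) + ipY (ld t) (l t))).
Proof.
move=> ht.
have E : N = (fun s => ipX (x s) (x s) + ipY (l s) (l s)).
  by rewrite funeqE => s; rewrite /N -(ipnn hipX) -(ipnn hipY).
rewrite E.
apply: (is_derive_eq (is_derive_addf (is_derive_ip hipX (xD ht) (xD ht))
                                      (is_derive_ip hipY (lD ht) (lD ht)))).
rewrite (ipC hipX (x t)) (ipC hipY (l t)); ring.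
Qed.

Let Q t := Rintegral lebesgue_measure `[t1, t] N.

Lemma QD t : t1 < t -> is_derive t 1 Q (N t).
Proof.
move=> ht; apply: ftc_deriv => //.
apply: continuous_in_subspaceT => u; rewrite inE /= in_itv /= andbT => hu.
apply: is_derive_cont (ND _); apply: lt_le_trans hu; exact: t1_gt.
Qed.

Lemma mvt_R (g dg : R -> R) (a h : R) : 0 < h ->
  (forall u, a <= u <= a + h -> is_derive u 1 g (dg u)) ->
  exists2 c, a <= c <= a + h & g (a + h) - g a = dg c * h.
Proof.
move=> h0 hd.
have ah : a < a + h by rewrite ltrDl.
have hd' : forall u, u \in `]a, a + h[ -> is_derive u 1 g (dg u).
  by move=> u; rewrite in_itv /= => /andP[/ltW h1 /ltW h2]; apply: hd; rewrite h1 h2.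
have hc' : {within `[a, a + h], continuous g}.
  apply: continuous_in_subspaceT => u; rewrite inE /= in_itv /= => hu.
  exact: (is_derive_cont (hd u hu)).
have [c hc E] := MVT_segment (ltW ah) hd' hc'.
exists c; first by move: hc; rewrite in_itv.
by rewrite E addrAC subrr add0r.
Qed.

Lemma mvt_vec (V : normedModType R) (ip : V -> V -> R) (hip : is_inner_product ip)
  (u du : R -> V) (a h : R) : 0 < h ->
  (forall v, a <= v <= a + h -> is_derive v 1 u (du v)) ->
  exists2 c, a <= c <= a + h &
    ip (u (a + h) - u a) (u (a + h) - u a) <= h ^+ 2 * ip (du c) (du c).
Proof.
move=> h0 hd; set w := u (a + h) - u a.
have hd' : forall v, a <= v <= a + h -> is_derive v 1 (fun v => ip (u v) w) (ip (du v) w).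
  move=> v hv; apply: (is_derive_eq (is_derive_ip hip (hd v hv) (is_derive_cstf w v))).
  by rewrite (ip0r hip) addr0.
have [c hc E] := @mvt_R (fun v => ip (u v) w) (fun v => ip (du v) w) a h h0 hd'.
exists c => //.
have Ew : ip w w = ip (du c) w * h by rewrite -E {1}/w (ipBl hip).
have := ip_le hip (h *: du c) w.
rewrite -!(ipnn hip) (ipZZ hip) (ipZl hip).
nra.
Qed.

Let E2 h s := ipX (x (s + h) - x s) (x (s + h) - x s) + ipY (l (s + h) - l s) (l (s + h) - l s)
   + (eps (s + h) - eps s) * (Q (s + h) - Q s).
Let W h s := P s * P (s + h).
Let F2 h s := E2 h s * W h s.

Lemma QD' s u : t1 < s -> s <= u -> is_derive u 1 Q (N u).
Proof. by move=> hs hu; apply: QD; exact: lt_le_trans hu. Qed.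

Lemma N_ge0 s : 0 <= N s.
Proof. by rewrite /N addr_ge0 // sqr_ge0. Qed.

Lemma G_bounds h s : 0 < h -> t1 < s -> 0 <= Q (s + h) - Q s <= h * B.
Proof.
move=> h0 hs.
have [c /andP[hc1 hc2] ->] := @mvt_R Q N s h h0 (fun u hu => QD' hs (andP hu).1).
have := N_ge0 c; have := @N_bound c (ltW (lt_le_trans hs hc1)).
move=> h1 h2; apply/andP; split; nra.
Qed.

Lemma t0_lt s : t1 < s -> t0 < s.
Proof. move=> hs; exact: lt_trans t1_gt hs. Qed.

Lemma E2_deriv h s : 0 < h -> t1 < s ->
  is_derive s 1 (F2 h)
   (((ipX (xd (s + h) - xd s) (x (s + h) - x s) + ipX (x (s + h) - x s) (xd (s + h) - xd s))
    + (ipY (ld (s + h) - ld s) (l (s + h) - l s) + ipY (l (s + h) - l s) (ld (s + h) - ld s))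
    + ((derive1 eps (s + h) - derive1 eps s) * (Q (s + h) - Q s)
       + (eps (s + h) - eps s) * (N (s + h) - N s))) * W h s
    + E2 h s * (eps s * P s * P (s + h) + P s * (eps (s + h) * P (s + h)))).
Proof.
move=> h0 hs.
have hs0 : t0 < s := t0_lt hs.
have hsh1 : t1 < s + h by apply: (lt_trans hs); rewrite ltrDl.
have hsh : t0 < s + h := t0_lt hsh1.
have hDx := is_derive_subf (is_derive_shiftarg (xD hsh)) (xD hs0).
have hDl := is_derive_subf (is_derive_shiftarg (lD hsh)) (lD hs0).
have hdel := is_derive_subf (V:=R^o) (is_derive_shiftarg (eD hsh)) (eD hs0).
have hG := is_derive_subf (V:=R^o) (is_derive_shiftarg (QD hsh1)) (QD hs).
have hE := is_derive_addf (V:=R^o) (is_derive_addf (V:=R^o) (is_derive_ip hipX hDx hDx)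
              (is_derive_ip hipY hDl hDl)) (is_derive_mulf hdel hG).
have hW := is_derive_mulf (PD hs0) (is_derive_shiftarg (PD hsh)).
exact: (is_derive_mulf hE hW).
Qed.


Lemma F2_nonincr h u v : 0 < h -> t1 < u -> u <= v -> F2 h v <= F2 h u.
Proof.
move=> h0 hu huv.
apply: (@nonincr_deriv _ (F2 h) _ t1 (fun s hs => E2_deriv h0 hs)) => // s hs.
have hs0 : t0 < s := t0_lt hs.
have hsh1 : t1 < s + h by apply: (lt_trans hs); rewrite ltrDl.
have hsh : t0 < s + h := t0_lt hsh1.
have hsp : tp < s by apply: le_lt_trans hs; rewrite /t1 lerDl.
have hphi := phi_mono hsp (ltW (ltr_pwDr h0 (lexx s))).
have [hG _] := andP (G_bounds h0 hs).
have Wp : 0 < W h s by rewrite /W mulr_gt0 // Ppos.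
have K := keyT b hipX hipY Aadj gmono (x (s + h)) (x s) (l (s + h)) (l s) (eps (s + h)) (eps s).
rewrite -(odex hsh) -(odex hs0) -(odel hsh) -(odel hs0) in K.
rewrite -!(ipnn hipX) -!(ipnn hipY) in K.
rewrite (ipC hipX (x (s + h) - x s)) (ipC hipY (l (s + h) - l s)).
set al := eps (s + h) in K hphi *; set be := eps s in K hphi *.
set G := Q (s + h) - Q s in hG *.
have E : N (s + h) - N s = ipX (x (s + h)) (x (s + h)) + ipY (l (s + h)) (l (s + h))
          - ipX (x s) (x s) - ipY (l s) (l s).
  by rewrite /N -!(ipnn hipX) -!(ipnn hipY); ring.
rewrite E.
have dW : be * P s * P (s + h) + P s * (al * P (s + h)) = (al + be) * W h s.
  exact: dW_arith.
rewrite dW.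
have Hphi : G * (phi (s + h) - phi s) <= 0.
  by rewrite mulr_ge0_le0 // subr_le0.
rewrite /phi -/al -/be in Hphi.
have -> : forall a b c : R, a * c + b * ((al + be) * c) = c * (a + (al + be) * b).
  by move=> *; ring.
rewrite pmulr_rle0 // /E2 -/al -/be -/G.
exact: F2_arith K Hphi.
Qed.

Let s0 := t1 + 1.
Lemma s0_gt : t1 < s0. Proof. by rewrite /s0 ltrDl. Qed.
Lemma s0_gt0 : t0 < s0. Proof. exact: t0_lt s0_gt. Qed.
Lemma s0_gtp : tp < s0. Proof. rewrite /s0 /t1; lra. Qed.

Let m1 u := ipX (xd u) (xd u) + ipY (ld u) (ld u).
Let m2 u := `|derive1 eps u|.

Lemma m1_cont u : t0 < u -> {for u, continuous m1}.
Proof.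
move=> hu; have [_ [_ [cx cl]]] := xdH hu.
rewrite /m1 /xd /ld; apply: cvgD; [exact: (ip_cvg hipX _ cx cx) | exact: (ip_cvg hipY _ cl cl)].
Qed.

Lemma m2_cont u : t0 < u -> {for u, continuous m2}.
Proof.
move=> hu; have [_ [hd _]] := edH hu.
have c : {for u, continuous (derive1 eps)}.
  by apply/differentiable_continuous/derivable1_diffP.
rewrite /m2; exact: cvg_norm c.
Qed.

Lemma in_s0 u : s0 <= u -> t0 < u.
Proof. move=> hu; exact: lt_le_trans s0_gt0 hu. Qed.

Lemma EVT1 : exists M1, forall u, s0 <= u <= s0 + 1 -> m1 u <= M1.
Proof.
have le1 : s0 <= s0 + 1 by rewrite lerDl.
have cc : {within `[s0, s0 + 1], continuous m1}.
  apply: continuous_in_subspaceT => u; rewrite inE /= in_itv /= => /andP[hu _].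
  exact: m1_cont (in_s0 hu).
have [c _ hc] := EVT_max le1 cc.
by exists (m1 c) => u hu; apply: hc; rewrite in_itv.
Qed.

Lemma EVT2 : exists M2, forall u, s0 <= u <= s0 + 1 -> m2 u <= M2.
Proof.
have le1 : s0 <= s0 + 1 by rewrite lerDl.
have cc : {within `[s0, s0 + 1], continuous m2}.
  apply: continuous_in_subspaceT => u; rewrite inE /= in_itv /= => /andP[hu _].
  exact: m2_cont (in_s0 hu).
have [c _ hc] := EVT_max le1 cc.
by exists (m2 c) => u hu; apply: hc; rewrite in_itv.
Qed.

Lemma Es0 : exists C0, 0 <= C0 /\ forall h, 0 < h <= 1 -> E2 h s0 <= h ^+ 2 * C0.
Proof.
have [M1 hM1] := EVT1; have [M2 hM2] := EVT2.
have ss : s0 <= s0 <= s0 + 1 by apply/andP; split; [exact: lexx | rewrite lerDl].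
have M10 : 0 <= M1.
  apply: le_trans (hM1 _ ss); rewrite /m1 addr_ge0 //; exact: ip_ge0.
have M20 : 0 <= M2 by apply: le_trans (hM2 _ ss); rewrite /m2.
exists (2 * M1 + M2 * B); split.
  by rewrite addr_ge0 // ?mulr_ge0 // B_ge0.
move=> h /andP[h0 h1].
have rng : forall u, s0 <= u <= s0 + h -> s0 <= u <= s0 + 1.
  move=> u /andP[-> hu] /=; apply: le_trans hu _; by rewrite lerD2l.
have hdx : forall v, s0 <= v <= s0 + h -> is_derive v 1 x (xd v).
  by move=> v /andP[hv _]; apply: xD; exact: in_s0.
have hdl : forall v, s0 <= v <= s0 + h -> is_derive v 1 l (ld v).
  by move=> v /andP[hv _]; apply: lD; exact: in_s0.
have hde : forall v, s0 <= v <= s0 + h -> is_derive v 1 eps (derive1 eps v).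
  by move=> v /andP[hv _]; apply: eD; exact: in_s0.
have [c1 hc1 H1] := mvt_vec hipX h0 hdx.
have [c2' hc2 H2] := mvt_vec hipY h0 hdl.
have [c3 hc3 H3] := @mvt_R eps (derive1 eps) s0 h h0 hde.
have a1 : ipX (x (s0 + h) - x s0) (x (s0 + h) - x s0) <= h ^+ 2 * M1.
  apply: le_trans H1 _; apply: ler_wpM2l; first exact: sqr_ge0.
  apply: le_trans (hM1 _ (rng _ hc1)); rewrite /m1 lerDl; exact: ip_ge0.
have a2 : ipY (l (s0 + h) - l s0) (l (s0 + h) - l s0) <= h ^+ 2 * M1.
  apply: le_trans H2 _; apply: ler_wpM2l; first exact: sqr_ge0.
  apply: le_trans (hM1 _ (rng _ hc2)); rewrite /m1 lerDr; exact: ip_ge0.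
have a3 := hM2 _ (rng _ hc3).
have a4 := G_bounds h0 s0_gt.
rewrite /E2.
exact: Es_arith a1 a2 H3 a3 a4 h0.
Qed.

Lemma EF : exists K, 0 <= K /\ forall h, 0 < h <= 1 -> forall t, s0 <= t ->
  E2 h t <= h ^+ 2 * K * eps t ^+ 2.
Proof.
have [C0 [C00 hC0]] := Es0.
have e0 : 0 < eps s0 by apply/epos/ltW/s0_gt0.
have Ps := Ppos s0.
pose K1 := P (s0 + 1) / (P s0 * eps s0 ^+ 2).
have K10 : 0 <= K1.
  apply: divr_ge0; first exact: ltW (Ppos _).
  apply: mulr_ge0; [exact: ltW Ps | exact: sqr_ge0].
exists (C0 * K1); split; first exact: mulr_ge0.
move=> h /andP[h0 h1] t ht.
have hF := F2_nonincr h0 s0_gt ht.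
have hs0h : t0 < s0 + h by apply: lt_trans s0_gt0 _; rewrite ltrDl.
have Ws1 : W h s0 <= P s0 * P (s0 + 1).
  rewrite /W; apply: ler_wpM2l; first exact: ltW Ps.
  apply: Pmono; [exact: hs0h | rewrite lerD2l; exact: h1].
have Ws2 : P s0 * P (s0 + 1) = K1 * (P s0 * eps s0) ^+ 2.
  by rewrite /K1; apply: K1_arith; rewrite gt_eqF.
have Ws3 : P s0 * eps s0 <= P t * eps t := Pe_mono s0_gtp ht.
have Wt1 : P t ^+ 2 <= W h t.
  rewrite /W expr2; apply: ler_wpM2l; first exact: ltW (Ppos t).
  apply: Pmono; [exact: in_s0 ht | rewrite lerDl; exact: ltW h0].
have Wsp : 0 < W h s0 by rewrite /W; apply: mulr_gt0; exact: Ppos.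
have hh : 0 < h <= 1 by rewrite h0 h1.
have Es := hC0 h hh.
rewrite /F2 in hF.
exact: (EF_arith hF Es Wsp Ws1 Ws2 Ws3 Wt1 (Ppos t) (mulr_ge0 (ltW Ps) (ltW e0)) C00 K10 (sqr_ge0 h)).
Qed.

Lemma ip_lt_sq (V : normedModType R) (ip : V -> V -> R) (hip : is_inner_product ip)
  (v : V) (e : R) : `|v| < e -> ip v v <= e ^+ 2.
Proof.
move=> h; rewrite (ipnn hip) !expr2.
have n0 := normr_ge0 v.
by apply: ler_pM => //; exact: ltW.
Qed.

Lemma ip_scale_inv (V : normedModType R) (ip : V -> V -> R) (hip : is_inner_product ip)
  (v : V) (h : R) : h != 0 -> ip v v = h ^+ 2 * ip (h^-1 *: v) (h^-1 *: v).
Proof.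
move=> h0; rewrite (ipZZ hip) mulrA -exprMn mulfV // expr1n mul1r //.
Qed.

Lemma xd_bound : exists K2, 0 <= K2 /\ forall t, s0 <= t ->
  ipX (xd t) (xd t) + ipY (ld t) (ld t) <= K2 * eps t ^+ 2.
Proof.
have [K [K0 hK]] := EF.
exists (2 * K + 4 * B + 4); split.
  by have := B_ge0; lra.
move=> t ht.
have ht0 : t0 < t := in_s0 ht.
have ht1 : t1 < t := lt_le_trans s0_gt ht.
have et : 0 < eps t by apply/epos/ltW.
have cx := dnbhs_right (cvg_is_derive (xD ht0)).
have cl := dnbhs_right (cvg_is_derive (lD ht0)).
have ce := dnbhs_right (cvg_is_derive (eD ht0)).
have [hphi _] := tpc (lt_le_trans s0_gtp ht).
have : \forall k \near 0^'+,
   [/\ 0 < k, k <= 1, `|xd t - k^-1 *: (x (k + t) - x t)| < eps t,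
       `|ld t - k^-1 *: (l (k + t) - l t)| < eps t &
       derive1 eps t - eps t ^+ 2 < k^-1 *: (eps (k + t) - eps t)].
  near=> k; split.
  - by near: k; exact: nbhs_right_gt.
  - by near: k; apply: nbhs_right_le; exact: ltr01.
  - by near: k; apply: (cvgr_dist_lt _ _ cx).
  - by near: k; apply: (cvgr_dist_lt _ _ cl).
  - near: k; apply: (cvgr_gt _ ce).
    by rewrite ltrBlDr ltrDl exprn_gt0.
move=> /filter_pick [h [h0 h1 nx nl ne]].
rewrite [h + t]addrC in nx nl ne.
have hh : 0 < h <= 1 by rewrite h0 h1.
have E := hK h hh t ht; rewrite /E2 in E.
have [G0 G1] := andP (G_bounds h0 ht1).
have hn0 : h != 0 by rewrite gt_eqF.
rewrite (ip_scale_inv hipX (x (t + h) - x t) hn0) (ip_scale_inv hipY (l (t + h) - l t) hn0) in E.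
have dx := ip_lt_sq hipX nx; have dl := ip_lt_sq hipY nl.
have bx := ipB_le2 hipX (xd t) (h^-1 *: (x (t + h) - x t)).
have bl := ipB_le2 hipY (ld t) (h^-1 *: (l (t + h) - l t)).
have hdel : - 2 * eps t ^+ 2 * h <= eps (t + h) - eps t.
  have -> : eps (t + h) - eps t = h * (h^-1 * (eps (t + h) - eps t)).
    by rewrite mulrA mulfV // mul1r.
  have : - 2 * eps t ^+ 2 <= h^-1 * (eps (t + h) - eps t).
    apply: le_trans (ltW ne); rewrite /GRing.scale /=; lra.
  by move=> hh2; rewrite [X in _ <= X]mulrC ler_pM2r.
exact: (final_arith E hdel G0 G1 dx dl bx bl h0 K0 B_ge0).
Unshelve. all: by end_near. Qed.

Lemma Tdiff1 t : t0 < t ->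
  T1 gf As (x t) (l t) - T1 gf As (xt t) (lt t) = - (xd t + eps t *: (x t - xt t)).
Proof.
move=> ht; rewrite /T1.
have e1 : gf (x t) + As (l t) = - (xd t + eps t *: x t).
  by rewrite (odex ht) subrK opprK.
have e2 : gf (xt t) + As (lt t) = - (eps t *: xt t).
  by apply/eqP; rewrite -addr_eq0; apply/eqP; exact: (ztH (ltW ht)).1.
by rewrite e1 e2 scalerBr !opprD !opprK addrA.
Qed.

Lemma Tdiff2 t : t0 < t ->
  T2 A b (x t) - T2 A b (xt t) = - (ld t + eps t *: (l t - lt t)).
Proof.
move=> ht; rewrite /T2.
have e1 : b - A (x t) = - (ld t + eps t *: l t).
  by rewrite (odel ht) subrK opprB.
have e2 : b - A (xt t) = - (eps t *: lt t).
  by apply/eqP; rewrite -addr_eq0; apply/eqP; exact: (ztH (ltW ht)).2.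
by rewrite e1 e2 scalerBr !opprD !opprK addrA.
Qed.

Lemma final_bound : exists K, 0 <= K /\ exists s, forall t, s <= t ->
  sqnorm2 (derive1 x t + eps t *: (x t - xt t)) (derive1 l t + eps t *: (l t - lt t))
    <= K * eps t ^+ 2 /\
  sqnorm2 (T1 gf As (x t) (l t) - T1 gf As (xt t) (lt t)) (T2 A b (x t) - T2 A b (xt t))
    <= K * eps t ^+ 2.
Proof.
have [K2 [K20 hK2]] := xd_bound.
have c20 : 0 <= c2 by rewrite /c2 addr_ge0 // sqr_ge0.
exists (2 * K2 + 4 * (B + c2)); split.
  by apply: addr_ge0; [exact: mulr_ge0 | apply: mulr_ge0 => //; exact: addr_ge0 B_ge0 c20].
exists s0 => t ht.
have ht0 : t0 < t := in_s0 ht.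
have ht1 : t1 <= t by apply: ltW; exact: lt_le_trans s0_gt ht.
have b1 : sqnorm2 (derive1 x t + eps t *: (x t - xt t)) (derive1 l t + eps t *: (l t - lt t))
    <= (2 * K2 + 4 * (B + c2)) * eps t ^+ 2.
  rewrite /sqnorm2 -(ipnn hipX) -(ipnn hipY).
  have h1 := ipD_le2 hipX (xd t) (eps t *: (x t - xt t)).
  have h2 := ipD_le2 hipY (ld t) (eps t *: (l t - lt t)).
  rewrite (ipZZ hipX) in h1; rewrite (ipZZ hipY) in h2.
  have h3 := ipD_le2 hipX (x t) (- xt t).
  have h4 := ipD_le2 hipY (l t) (- lt t).
  rewrite (ipNl hipX) (ipNr hipX) opprK in h3.
  rewrite (ipNl hipY) (ipNr hipY) opprK in h4.
  have h5 := hK2 t ht.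
  have h6 := N_bound ht1; rewrite /N -(ipnn hipX) -(ipnn hipY) in h6.
  have h7 := zt_bound (ltW ht0).
  exact: (fb_arith h1 h2 h3 h4 h5 h6 h7 (sqr_ge0 (eps t))).
split => //.
by rewrite (Tdiff1 ht0) (Tdiff2 ht0) /sqnorm2 !normrN.
Qed.

End Main.


Unset Implicit Arguments.

Theorem theorem4p5
  (R : realType) (X Y : completeNormedModType R)
  (ipX : X -> X -> R) (ipY : Y -> Y -> R)
  (f : X -> R) (gf : X -> X) (A : {linear X -> Y}) (As : Y -> X) (b : Y)
  (eps : R -> R) (t0 : R)
  (x : R -> X) (l : R -> Y) (xt : R -> X) (lt : R -> Y) :
  (* X, Y real Hilbert spaces *)
  is_inner_product ipX -> is_inner_product ipY ->
  (* f convex *)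
  (forall (u v : X) (a : R), 0 <= a <= 1 ->
     f (a *: u + (1 - a) *: v) <= a * f u + (1 - a) * f v) ->
  (* f continuously (Frechet) differentiable, with gradient gf *)
  (forall u : X, differentiable f u) ->
  (forall u v : X, 'd f u v = ipX (gf u) v) ->
  continuous gf ->
  (* gf Lipschitz continuous on bounded sets *)
  (forall r : R, 0 < r -> exists L : R, forall u v : X,
     `|u| <= r -> `|v| <= r -> `|gf u - gf v| <= L * `|u - v|) ->
  (* A continuous linear, As its adjoint *)
  continuous A ->
  (forall (u : X) (w : Y), ipY (A u) w = ipX u (As w)) ->
  (* eps : [t0, +oo[ -> ]0, +oo[, C^2, vanishing at +oo *)
  0 <= t0 ->
  (forall t, t0 <= t -> 0 < eps t) ->
  {within `[t0, +oo[, continuous eps} ->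
  (forall t, t0 < t -> derivable eps t 1 /\ derivable (derive1 eps) t 1
                        /\ {for t, continuous (derive1n 2 eps)}) ->
  eps s @[s --> +oo] --> 0 ->
  (* S x M nonempty: L has a saddle point *)
  (exists (xs : X) (ls : Y), saddle_point (lagrangian ipY f A b) xs ls) ->
  (* (x, l) is a solution of (AHT) *)
  {within `[t0, +oo[, continuous x} -> {within `[t0, +oo[, continuous l} ->
  (forall t, t0 < t -> derivable x t 1 /\ derivable l t 1 /\
     {for t, continuous (derive1 x)} /\ {for t, continuous (derive1 l)}) ->
  (forall t, t0 < t ->
     derive1 x t + gf (x t) + As (l t) + eps t *: x t = 0 /\
     derive1 l t + b - A (x t) + eps t *: l t = 0) ->
  (* (xt t, lt t) is the zero of T + eps(t) id *)
  (forall t, t0 <= t ->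
     T1 gf As (xt t) (lt t) + eps t *: xt t = 0 /\
     T2 A b (xt t) + eps t *: lt t = 0) ->
  (* condition on eps beyond t_+ *)
  (exists tp, t0 <= tp /\ forall t, tp < t ->
     eps t ^+ 2 + derive1 eps t >= 0 /\
     2 * eps t * derive1 eps t + derive1n 2 eps t <= 0) ->
  let rho t := Rintegral lebesgue_measure `[t0, t] eps in
  bigO_pinfty (fun t => sqnorm2 (derive1 x t + eps t *: (x t - xt t))
                    (derive1 l t + eps t *: (l t - lt t)))
     (fun t => expR (- 2 * rho t) + eps t ^+ 2)
  /\
  bigO_pinfty (fun t => sqnorm2 (T1 gf As (x t) (l t) - T1 gf As (xt t) (lt t))
                    (T2 A b (x t) - T2 A b (xt t)))
     (fun t => expR (- 2 * rho t) + eps t ^+ 2).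
Proof.
move=> hipX hipY fconv fdiff fgrad gcont glip Acont Aadj t00 epos econt edH elim
  saddle xc lc xdH ode ztH tpH rho.
have [xs [ls sp]] := saddle.
have [hs1 hs2] := saddle_zero hipX hipY Aadj fdiff fgrad sp.
have [tp [tp0 tpc]] := tpH.
have [K [K0 [s hs]]] := final_bound hipX hipY fconv fdiff fgrad Aadj epos econt edH xdH ode ztH
   hs1 hs2 tp0 tpc.
have key : forall (g : R -> R), (forall t, s <= t -> 0 <= g t /\ g t <= K * eps t ^+ 2) ->
  bigO_pinfty g (fun t => expR (- 2 * rho t) + eps t ^+ 2).
  move=> g hg; exists K; near=> t.
  have st : s <= t by near: t; apply: nbhs_pinfty_ge; exact: num_real.
  have [g0 g1] := hg t st.
  rewrite ger0_norm // ger0_norm; last by apply: addr_ge0; [exact: ltW (expR_gt0 _) | exact: sqr_ge0].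
  apply: le_trans g1 _; apply: ler_wpM2l => //.
  by rewrite lerDr; exact: ltW (expR_gt0 _).
split; apply: key => t st; have [h1 h2] := hs t st; split => //;
  by rewrite /sqnorm2 addr_ge0 // sqr_ge0.
Unshelve. all: by end_near. Qed.
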